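(* Let $3\le n\le k$ be integers and $g:\mathbb{N}\to\mathbb{R}$. For $j=1,\dots,n-1$ and $\mathbf{r}=(r_1,\dots,r_{n-1})$ define $$f_j(\mathbf{r})=\sum_{l=1}^{j}\mathds{1}_{\{r_l=1\}}\frac{(|\mathbf{r}|-1)!}{r_1!\cdots r_{n-1}!}\Big(\frac1k\Big)^{|\mathbf{r}|}g(r_{n-1}),$$ and for $i=1,\dots,n-1$ let $N_i=r_i+\dots+r_{n-1}$. Then for $j=1,\dots,n-2$, $$\sum_{\mathbf{r}\in E_j}f_j(\mathbf{r})=\sum_{l=1}^{j}\binom{j}{l}\frac{l}{k^l}\sum_{\substack{r_{l+1}\ge2,\dots,r_j\ge2\\ r_{j+1}\ge0,\dots,r_{n-1}\ge0}}\frac{(l-1+N_{l+1})!}{r_{l+1}!\cdots r_{n-1}!}\Big(\frac1k\Big)^{N_{l+1}}g(r_{n-1})$$ for any $g$ such that the right-hand side is finite. Moreover, this identity also holds for $j=n-1$ when $g(i)=1$ for all $i\in\mathbb{N}$, provided the right-hand side is finite.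
   Context: $\mathbb{N}=\{0,1,2,\dots\}$, $|\mathbf{r}|=r_1+\dots+r_{n-1}$, $0!=1$. For $j=1,\dots,n-1$, $E_j$ is the set of $\mathbf{r}\in\mathbb{N}^{n-1}$ such that $r_i\ge1$ for $1\le i\le j$, $r_l\ge0$ for $j+1\le l\le n-1$, and $\prod_{i=1}^{j}(r_i-1)=0$ (i.e. at least one of $r_1,\dots,r_j$ equals $1$). In the inner sum on the right, the constraint set $\{r_{l+1}\ge2,\dots,r_j\ge2\}$ is empty when $l=j$; for $j=n-1$ the constraints $r_{j+1},\dots,r_{n-1}\ge0$ are vacuous and $N_{n}=0$. *)

(* Defs.v *)
From HB Require Import structures.
From mathcomp Require Import all_boot all_order all_algebra.
From mathcomp Require Import all_classical all_reals all_analysis.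
Set Implicit Arguments. Unset Strict Implicit. Unset Printing Implicit Defensive.
Import Order.TTheory GRing.Theory Num.Theory.
Import numFieldNormedType.Exports.
Local Open Scope classical_set_scope.
Local Open Scope ring_scope.

(* It is the
   usual value of the sum when the family is (absolutely) summable. *)
Definition sumR (T : choiceType) (R : realType) (D : set T) (F : T -> R)
  : \bar R :=
  (\esum_(x in D) (fun y => (F y)%:E)^\+ x - \esum_(x in D) (fun y => (F y)%:E)^\- x)%E.

(* Vectors r = (r_1, ..., r_{n-1}) in N^{n-1} are sequences of length n-1;
   r_i (1-based) is  nth 0 r i.-1 ;  |r| = sumn r. *)

Definition Eset (n j : nat) : set (seq nat) :=
  [set r | size r = n.-1 /\
           (forall i, (1 <= i <= j)%N -> (1 <= nth 0 r i.-1)%N) /\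
           (\prod_(1 <= i < j.+1) (nth 0 r i.-1 - 1) = 0)%N].

Definition fj (R : realType) (n k : nat) (g : nat -> R) (j : nat)
  (r : seq nat) : R :=
  \sum_(1 <= l < j.+1)
     ((nth 0 r l.-1 == 1%N)%:R
      * (((sumn r).-1)`!%:R / (\prod_(x <- r) x`!)%:R)
      * (k%:R^-1) ^+ (sumn r)
      * g (nth 0 r (n.-1).-1)).

(* Index set of the inner sum on the right-hand side for a given l:
   s = (r_{l+1}, ..., r_{n-1}) (a sequence of length n-1-l, with
   r_i = nth 0 s (i - l.+1)), subject to r_{l+1}, ..., r_j >= 2. *)
Definition Iset (n j l : nat) : set (seq nat) :=
  [set s | size s = (n.-1 - l)%N /\
           (forall i, (l.+1 <= i <= j)%N -> (2 <= nth 0 s (i - l.+1))%N)].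

Definition Iterm (R : realType) (n k : nat) (g : nat -> R) (l : nat)
  (s : seq nat) : R :=
  ((l.-1 + sumn s)`!%:R / (\prod_(x <- s) x`!)%:R)
  * (k%:R^-1) ^+ (sumn s)
  * g (nth 0 s ((n.-1) - l.+1)).

Definition coef (R : realType) (k j l : nat) : R :=
  'C(j, l)%:R * l%:R / (k%:R ^+ l).

(* "the right-hand side is finite": every inner sum is (absolutely) finite *)
Definition rhs_finite (R : realType) (n k : nat) (g : nat -> R) (j : nat) : Prop :=
  forall l, (1 <= l <= j)%N ->
    summable (Iset n j l) (fun s => (Iterm n k g l s)%:E).

Definition identity_holds (R : realType) (n k : nat) (g : nat -> R) (j : nat) : Prop :=
  summable (Eset n j) (fun r => (fj n k g j r)%:E) /\
  sumR (Eset n j) (fj n k g j) =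
  (\sum_(1 <= l < j.+1) (coef R k j l)%:E * sumR (Iset n j l) (Iterm n k g l))%E.

(* Main.v *)
Require Import Defs.
From HB Require Import structures.
From mathcomp Require Import all_boot all_order all_algebra.
From mathcomp Require Import all_classical all_reals all_analysis.
From mathcomp Require Import zify ring lra.
Set Implicit Arguments. Unset Strict Implicit. Unset Printing Implicit Defensive.
Import Order.TTheory GRing.Theory Num.Theory.
Fixpoint ins (b : seq bool) (s : seq nat) : seq nat :=
  match b with
  | [::] => s
  | x :: b' => if x then 1 :: ins b' s else head 0 s :: ins b' (behead s)
  end.

Lemma sumn_ins b s : sumn (ins b s) = count id b + sumn s.
Proof.
elim: b s => [|[] b IH] s; first by [].
  by rewrite /= IH addnA.
rewrite /= IH; case: s => [|x s] /=; lia.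
Qed.

Lemma prod_ins b s : \prod_(x <- ins b s) x`! = \prod_(x <- s) x`!.
Proof.
elim: b s => [|[] b IH] s; first by [].
  by rewrite /= big_cons IH mul1n.
rewrite /= big_cons IH; case: s => [|x s]; first by rewrite big_nil.
by rewrite big_cons.
Qed.

Lemma size_ins b s : count negb b <= size s -> size (ins b s) = count id b + size s.
Proof.
elim: b s => [|x b IH] s; first by rewrite /=.
case: x => /= h; first by rewrite IH.
case: s h => [|y s] h /=; first by [].
by rewrite IH ?addnS.
Qed.

Section C.
Variables (b : seq bool) (s : seq nat).
Hypotheses (h1 : count negb b <= size s) (h2 : all (leq 2) (take (count negb b) s)).

Lemma ins_prop :
  [/\ [seq x == 1 | x <- take (size b) (ins b s)] = b,
      all (leq 1) (take (size b) (ins b s)),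
      [seq x <- take (size b) (ins b s) | x != 1] = take (count negb b) s &
      drop (size b) (ins b s) = drop (count negb b) s].
Proof.
elim: b s h1 h2 => [|[] b' IH] s' H1 H2 /=.
- by rewrite take0 drop0.
- by have [-> -> -> ->] := IH s' H1 H2.
- case: s' H1 H2 => [|x s'] //= H1 /andP[hx H2].
  have [-> -> -> ->] := IH s' H1 H2.
  have -> : (x == 1) = false by apply/negbTE; rewrite neq_ltn; apply/orP; right.
  by rewrite (leq_trans _ hx) //= ifT // neq_ltn hx orbT.
Qed.
End C.

Lemma ins_dec t u : ins [seq x == 1 | x <- t] ([seq x <- t | x != 1] ++ u) = t ++ u.
Proof.
elim: t => [|x t IH] //=.
by case: eqP => [->|/eqP nx] /=; rewrite IH.
Qed.

Lemma big_take (R : Type) (idx : R) (op : Monoid.law idx) (F : nat -> R) j r :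
  j <= size r ->
  \big[op/idx]_(1 <= l < j.+1) F (nth 0 r l.-1) = \big[op/idx]_(x <- take j r) F x.
Proof.
move=> hj; rewrite big_add1 /= [RHS](big_nth 0) size_take_min.
have -> : minn j (size r) = j by apply/minn_idPl.
by apply: eq_big_nat => i /andP[_ hi]; rewrite nth_take.
Qed.

Fixpoint allb (j : nat) : seq (seq bool) :=
  if j is j'.+1 then [seq true :: b | b <- allb j'] ++ [seq false :: b | b <- allb j']
  else [:: [::]].

Lemma mem_allb j b : (b \in allb j) = (size b == j).
Proof.
have injT : injective (cons true) by move=> x y [].
have injF : injective (cons false) by move=> x y [].
elim: j b => [|j IH] b; first by case: b => [|x b].
rewrite /= mem_cat; case: b => [|x b] /=.
  by apply/negbTE/negP => /orP[] /mapP[].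
case: x.
  rewrite (mem_map injT) IH eqSS.
  case: (size b == j); first by [].
  by rewrite /=; apply/negbTE/negP => /mapP[].
rewrite (mem_map injF) IH eqSS.
case: (size b == j); first by rewrite orbT.
by rewrite orbF; apply/negbTE/negP => /mapP[].
Qed.

Lemma uniq_allb j : uniq (allb j).
Proof.
elim: j => [|j IH] //=; rewrite cat_uniq !map_inj_uniq ?IH ?andbT //;
  try by move=> x y [].
by apply/hasPn => x /mapP[y _ ->]; apply/mapP => -[z _].
Qed.

Lemma sum_allb (V : nmodType) (F : nat -> V) j :
  (\sum_(b <- allb j) F (count id b) = \sum_(0 <= l < j.+1) F l *+ 'C(j, l))%R.
Proof.
elim: j F => [|j IH] F.
  by rewrite /= big_seq1 big_nat1.
rewrite /= big_cat !big_map /=.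
rewrite (IH (fun l => F l.+1)) (IH F) /=.
rewrite [RHS]big_nat_recl // bin0.
under [in RHS]eq_bigr do rewrite binS mulrnDr.
rewrite [in RHS]big_split /= [RHS]addrA [RHS]addrC; congr (_ + _)%R.
rewrite [LHS]big_nat_recl // bin0 [in RHS]big_nat_recr //=.
by rewrite bin_small // mulr0n addr0.
Qed.

Lemma prod_sub1 (t : seq nat) : has (eq_op^~ 1) t -> \prod_(x <- t) (x - 1) = 0.
Proof.
elim: t => [|x t IH] //=; rewrite big_cons.
by case: eqP => [-> _|_ /= /IH ->]; rewrite ?muln0.
Qed.

Lemma prod_sub1_inv (t : seq nat) : all (leq 1) t -> \prod_(x <- t) (x - 1) = 0 ->
  has (eq_op^~ 1) t.
Proof.
elim: t => [|x t IH]; first by rewrite big_nil.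
rewrite big_cons /= => /andP[hx ht] /eqP; rewrite muln_eq0 => /orP[/eqP h|/eqP h].
  by apply/orP; left; apply/eqP; lia.
by rewrite IH ?orbT.
Qed.

Lemma count_b (b : seq bool) : count id b + count negb b = size b.
Proof. exact: (count_predC id b). Qed.

Lemma Iset_C n j b s : size b = j -> j <= n.-1 -> Iset n j (count id b) s ->
  count negb b <= size s /\ all (leq 2) (take (count negb b) s).
Proof.
move=> sb jn [sz H]; have cb := count_b b.
split; first by rewrite sz; lia.
apply/(all_nthP 0) => i; rewrite size_take_min => hi.
rewrite nth_take; last by lia.
have := H (i + (count id b).+1); rewrite addnK; apply; lia.
Qed.

Lemma Eset_ins n j b s : size b = j -> j <= n.-1 -> Iset n j (count id b) s ->
  has id b -> Eset n j (ins b s).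
Proof.
move=> sb jn hI hb; have [H1 H2] := Iset_C sb jn hI.
have [e1 e2 e3 e4] := ins_prop H1 H2.
have cb := count_b b.
have sz : size (ins b s) = n.-1.
  rewrite size_ins // (proj1 hI); lia.
rewrite sb in e1 e2 e3 e4.
split; [done | split].
- move=> i /andP[i1 ij].
  move/(all_nthP 0): e2 => /(_ i.-1); rewrite size_take_min nth_take; last by lia.
  apply; lia.
- rewrite (big_take _ (fun x => x - 1)); last by lia.
  apply: prod_sub1.
  have h : has id [seq x == 1 | x <- take j (ins b s)] by rewrite e1.
  rewrite has_map in h; exact: h.
Qed.

Lemma Eset_dec n j r : j <= n.-1 -> Eset n j r ->
  let b := [seq x == 1 | x <- take j r] in
  let s := [seq x <- take j r | x != 1] ++ drop j r in
  [/\ size b = j, has id b, Iset n j (count id b) s & ins b s = r].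
Proof.
move=> jn [sr [H1 H0]] b s.
have st : size (take j r) = j by rewrite size_take_min; lia.
have at1 : all (leq 1) (take j r).
  apply/(all_nthP 0) => i; rewrite st => hi; rewrite nth_take //.
  have := H1 i.+1; apply; lia.
split.
- by rewrite size_map.
- rewrite has_map; apply: sub_has (prod_sub1_inv at1 _) => //.
  by rewrite -(big_take _ (fun x => x - 1)) //; lia.
- have cc : count (fun x => x == 1) (take j r) + count (fun x => x != 1) (take j r) = j.
    by rewrite -[RHS]st; exact: (count_predC (fun x => x == 1) (take j r)).
  rewrite /b count_map.
  have -> : count (preim (eq_op^~ 1) id) (take j r) = count (fun x => x == 1) (take j r) by [].
  split.
    rewrite size_cat size_filter size_drop sr; move: cc jn.
    set c1 := count (eq_op^~ 1) _; set c2 := count _ (take j r); lia.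
  move=> i /andP[i1 i2].
  rewrite nth_cat size_filter.
  have hlt : i - (count (fun x => x == 1) (take j r)).+1 <
             count (fun x => x != 1) (take j r).
    by lia.
  rewrite hlt.
  have hlt' : i - (count (fun x => x == 1) (take j r)).+1 <
             size [seq x <- take j r | x != 1] by rewrite size_filter.
  have := mem_nth 0 hlt'.
  rewrite mem_filter => /andP[hn hm].
  move/allP: at1 => /(_ _ hm); move: hn.
  set y := nth 0 _ _; lia.
- by rewrite /b /s ins_dec cat_take_drop.
Qed.

Section Real.
Local Open Scope ring_scope.
Variable R : realType.

Lemma count_eq1 (t : seq nat) :
  \sum_(x <- t) ((x == 1%N)%:R : R) = (count (eq_op^~ 1%N) t)%:R.
Proof.
elim: t => [|x t IH]; first by rewrite big_nil.
by rewrite big_cons IH /= natrD.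
Qed.

Lemma size_ins2 n j b s : size b = j -> (j <= n.-1)%N -> Iset n j (count id b) s ->
  size (ins b s) = n.-1.
Proof.
move=> sb jn hI; have [H1 H2] := Iset_C sb jn hI.
have cb := count_b b; rewrite size_ins // (proj1 hI); lia.
Qed.

Lemma fj_ins n k (g : nat -> R) j b s :
  size b = j -> (j <= n.-1)%N -> Iset n j (count id b) s -> has id b ->
  g (nth 0%N (ins b s) (n.-1).-1) = g (nth 0%N s (n.-1 - (count id b).+1)) ->
  fj n k g j (ins b s) =
  (count id b)%:R * (k%:R^-1) ^+ (count id b) * Iterm n k g (count id b) s.
Proof.
move=> sb jn hI hb hg; have [H1 H2] := Iset_C sb jn hI.
have [e1 _ _ _] := ins_prop H1 H2.
have sz := size_ins2 sb jn hI.
rewrite /fj /Iterm.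
set C := (((sumn _).-1)`!%:R / _); set K := (k%:R^-1 ^+ sumn (ins b s)).
set G := g (nth _ _ (n.-1).-1).
rewrite -3!big_distrl /=.
rewrite (big_take _ (fun x => ((x == 1%N)%:R : R))); last by lia.
rewrite count_eq1.
have -> : count (eq_op^~ 1%N) (take j (ins b s)) = count id b.
  by rewrite -[in RHS]e1 sb count_map.
rewrite /C /K /G sumn_ins prod_ins hg.
have cpos : (0 < count id b)%N by rewrite -has_count.
have -> : ((count id b + sumn s).-1 = (count id b).-1 + sumn s)%N by lia.
rewrite exprD; ring.
Qed.

Lemma Iterm_ge0 n k (g : nat -> R) l s : (forall x, 0 <= g x) -> 0 <= Iterm n k g l s.
Proof.
move=> g0; rewrite /Iterm; apply: mulr_ge0; last exact: g0.
apply: mulr_ge0; last by rewrite exprn_ge0 // invr_ge0.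
by apply: divr_ge0.
Qed.

Lemma fj_ge0 n k (g : nat -> R) j r : (forall x, 0 <= g x) -> 0 <= fj n k g j r.
Proof.
move=> g0; rewrite /fj; apply: sumr_ge0 => l _.
apply: mulr_ge0; last exact: g0.
apply: mulr_ge0; last by rewrite exprn_ge0 // invr_ge0.
by apply: mulr_ge0; [|apply: divr_ge0].
Qed.

End Real.

Section Esum.
Local Open Scope ring_scope.
Local Open Scope ereal_scope.
Local Open Scope classical_set_scope.
Variable R : realType.

Lemma le_esumZ (T : choiceType) (D : set T) (a : T -> \bar R) (c : R) :
  (0 <= c)%R -> (forall i, 0 <= a i) ->
  \esum_(i in D) (c%:E * a i) <= c%:E * \esum_(i in D) a i.
Proof.
move=> c0 a0; apply: ge_ereal_sup => _ [X [finX XD] <-] /=.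
rewrite -ge0_mule_fsumr //; apply: lee_wpmul2l; first by rewrite lee_fin.
by apply: esum_ge; exists X.
Qed.

Lemma esumZ (T : choiceType) (D : set T) (a : T -> \bar R) (c : R) :
  (0 <= c)%R -> (forall i, 0 <= a i) ->
  \esum_(i in D) (c%:E * a i) = c%:E * \esum_(i in D) a i.
Proof.
move=> c0 a0; have [->|cn0] := eqVneq c 0%R.
  by rewrite mul0e; apply: esum1 => i _; rewrite mul0e.
have cp : (0 < c)%R by rewrite lt_def cn0.
apply/le_anti/andP; split; first exact: le_esumZ.
have ci : (0 <= c^-1)%R by rewrite invr_ge0 ltW.
have h := le_esumZ D (a := fun i => c%:E * a i) ci
  (fun i => mule_ge0 (ltW cp : (0%:E <= c%:E)) (a0 i)).
have e : forall i, (c^-1)%:E * (c%:E * a i) = a i.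
  by move=> i; rewrite muleA -EFinM mulVf // mul1e.
have e' : \esum_(i in D) ((c^-1)%:E * (c%:E * a i)) = \esum_(i in D) a i.
  by apply: eq_esum => i _; exact: e.
rewrite e' in h.
have := lee_wpmul2l (ltW cp : (0%:E <= c%:E)) h.
by rewrite muleA -EFinM divff // mul1e.
Qed.

Lemma natmulE (x : R) (X : \bar R) m : (0 <= x)%R -> 0 <= X ->
  GRing.natmul (x%:E * X)%E m = (x *+ m)%:E * X.
Proof.
move=> x0 X0; elim: m => [|m IH]; first by rewrite !mulr0n mul0e.
rewrite [LHS]mulrSr [in RHS]mulrSr IH EFinD ge0_muleDl // lee_fin ?mulrn_wge0 //.
Qed.

Lemma core n k (g : nat -> R) j : (1 <= j)%N -> (j <= n.-1)%N ->
  (forall x, (0 <= g x)%R) ->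
  (forall b s, size b = j -> Iset n j (count id b) s -> has id b ->
     g (nth 0%N (ins b s) (n.-1).-1) = g (nth 0%N s (n.-1 - (count id b).+1))) ->
  \esum_(r in Eset n j) (fj n k g j r)%:E =
  \sum_(1 <= l < j.+1) (coef R k j l)%:E * \esum_(s in Iset n j l) (Iterm n k g l s)%:E.
Proof.
move=> j1 jn g0 Hg.
pose B := [set` [seq b <- allb j | has id b]].
pose J := fun b : seq bool => Iset n j (count id b).
have memB b : B b <-> size b = j /\ has id b.
  rewrite /B /= mem_filter mem_allb; split.
    by move=> /andP[-> /eqP].
  by move=> [-> ->]; rewrite eqxx.
have bij : set_bij (B `*`` J) (Eset n j) (fun p => ins p.1 p.2).
  split.
  - move=> [b s] /= [/memB [sb hb] Js].
    exact: Eset_ins.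
  - move=> [b s] [b' s']; rewrite !inE /=.
    move=> [Bb Js] [Bb' Js'] e.
    move/memB: Bb => [sb hb]; move/memB: Bb' => [sb' hb'].
    have [C1 C2] := Iset_C sb jn Js; have [e1 _ e3 e4] := ins_prop C1 C2.
    have [C1' C2'] := Iset_C sb' jn Js'; have [e1' _ e3' e4'] := ins_prop C1' C2'.
    rewrite sb in e1 e3 e4; rewrite sb' in e1' e3' e4'.
    have eb : b = b' by rewrite -e1 -e1' e.
    subst b'; congr pair.
    rewrite -(cat_take_drop (count negb b) s) -(cat_take_drop (count negb b) s').
    by rewrite -e3 -e4 -e3' -e4' e.
  - move=> r Er; have [sb hb hI hr] := Eset_dec jn Er.
    by eexists (_, _); [split; [apply/memB|] | exact: hr].
rewrite (reindex_esum _ _ _ _ bij).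
rewrite -(esum_esum (a := fun b s => (fj n k g j (ins b s))%:E)); last first.
  by move=> b s _ _; rewrite lee_fin fj_ge0.
pose G l := ((l%:R * (k%:R^-1) ^+ l)%R)%:E * \esum_(s in Iset n j l) (Iterm n k g l s)%:E.
transitivity (\esum_(b in B) G (count id b)).
  apply: eq_esum => b /memB [sb hb].
  rewrite /G -esumZ; last by move=> s; rewrite lee_fin Iterm_ge0.
    apply: eq_esum => s Js /=.
    by rewrite fj_ins // ?EFinM //; exact: Hg.
  by rewrite mulr_ge0 // exprn_ge0 // invr_ge0.
have G0 : forall l, 0 <= G l.
  move=> l; apply: mule_ge0; first by rewrite lee_fin mulr_ge0 // exprn_ge0 // invr_ge0.
  by apply: esum_ge0 => s _; rewrite lee_fin Iterm_ge0.
rewrite esum_fset; [|exact: finite_seq| by move=> *; apply: G0].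
rewrite -fsbig_seq; last by rewrite filter_uniq // uniq_allb.
rewrite big_filter big_mkcond /=.
transitivity (\sum_(b <- allb j) G (count id b)).
  apply: eq_bigr => b _; case: ifP => // /negbT.
  rewrite has_count -leqNgt leqn0 => /eqP ->.
  by rewrite /G mul0r mul0e.
rewrite (sum_allb G) [LHS]big_nat_recl //.
have -> : G 0%N = 0 by rewrite /G mul0r mul0e.
rewrite mul0rn add0r.
rewrite big_add1 /=; apply: eq_bigr => l _.
rewrite /G natmulE; last 2 first.
- by rewrite mulr_ge0 // exprn_ge0 // invr_ge0.
- by apply: esum_ge0 => s _; rewrite lee_fin Iterm_ge0.
congr (_ * _); congr (_%:E).
rewrite /coef -mulr_natl exprVn; ring.
Qed.

End Esum.

Section Main.
Local Open Scope ring_scope.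
Variable R : realType.

Lemma fj_split n k (g : nat -> R) j r :
  fj n k g j r = fj n k (fun _ => 1) j r * g (nth 0%N r (n.-1).-1).
Proof. by rewrite /fj big_distrl; apply: eq_bigr => l _; rewrite mulr1. Qed.

Lemma Iterm_split n k (g : nat -> R) l s :
  Iterm n k g l s = Iterm n k (fun _ => 1) l s * g (nth 0%N s (n.-1 - l.+1)).
Proof. by rewrite /Iterm mulr1. Qed.

Lemma maxe_EM (a y : R) : 0 <= a -> maxe (a * y)%:E 0%E = (a * Num.max y 0)%:E.
Proof.
by move=> a0; rewrite (_ : 0%E = 0%:E) // -EFin_max maxr_pMr // mulr0.
Qed.

Lemma one_ge0 : forall x : nat, (0 : R) <= (fun _ => 1) x.
Proof. by move=> x; rewrite ler01. Qed.

Lemma pos_fj n k (g : nat -> R) j :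
  (fun r => (fj n k g j r)%:E)^\+%E = (fun r => (fj n k (fun x => Num.max (g x) 0) j r)%:E).
Proof.
apply/funext => r; rewrite funeposE fj_split maxe_EM; last exact: fj_ge0 one_ge0.
by rewrite [in RHS]fj_split.
Qed.

Lemma neg_fj n k (g : nat -> R) j :
  (fun r => (fj n k g j r)%:E)^\-%E = (fun r => (fj n k (fun x => Num.max (- g x) 0) j r)%:E).
Proof.
apply/funext => r; rewrite funenegE fj_split -EFinN -mulrN maxe_EM; last exact: fj_ge0 one_ge0.
by rewrite [in RHS]fj_split.
Qed.

Lemma abs_fj n k (g : nat -> R) j r :
  (`|(fj n k g j r)%:E| = (fj n k (fun x => `|g x|) j r)%:E)%E.
Proof.
rewrite abse_EFin fj_split normrM ger0_norm; last exact: fj_ge0 one_ge0.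
by rewrite [in RHS]fj_split.
Qed.

Lemma pos_Iterm n k (g : nat -> R) l :
  (fun s => (Iterm n k g l s)%:E)^\+%E = (fun s => (Iterm n k (fun x => Num.max (g x) 0) l s)%:E).
Proof.
apply/funext => s; rewrite funeposE Iterm_split maxe_EM; last exact: Iterm_ge0 one_ge0.
by rewrite [in RHS]Iterm_split.
Qed.

Lemma neg_Iterm n k (g : nat -> R) l :
  (fun s => (Iterm n k g l s)%:E)^\-%E = (fun s => (Iterm n k (fun x => Num.max (- g x) 0) l s)%:E).
Proof.
apply/funext => s; rewrite funenegE Iterm_split -EFinN -mulrN maxe_EM; last exact: Iterm_ge0 one_ge0.
by rewrite [in RHS]Iterm_split.
Qed.

Lemma abs_Iterm n k (g : nat -> R) l s :
  (`|(Iterm n k g l s)%:E| = (Iterm n k (fun x => `|g x|) l s)%:E)%E.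
Proof.
rewrite abse_EFin Iterm_split normrM ger0_norm; last exact: Iterm_ge0 one_ge0.
by rewrite [in RHS]Iterm_split.
Qed.

Lemma sumR_Iterm n k (g : nat -> R) j l :
  sumR (Iset n j l) (Iterm n k g l) =
  (\esum_(s in Iset n j l) (Iterm n k (fun x => Num.max (g x) 0) l s)%:E -
   \esum_(s in Iset n j l) (Iterm n k (fun x => Num.max (- g x) 0) l s)%:E)%E.
Proof.
rewrite /sumR; congr (_ - _)%E; apply: eq_esum => s _.
  rewrite funeposE Iterm_split maxe_EM; last exact: Iterm_ge0 one_ge0.
  by rewrite [in RHS]Iterm_split.
rewrite funenegE Iterm_split -EFinN -mulrN maxe_EM; last exact: Iterm_ge0 one_ge0.
by rewrite [in RHS]Iterm_split.
Qed.

Lemma sum_fine (c : nat -> R) (A : nat -> \bar R) j :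
  (forall l, (1 <= l <= j)%N -> A l \is a fin_num) ->
  (\sum_(1 <= l < j.+1) ((c l)%:E * A l)%E = (\sum_(1 <= l < j.+1) c l * fine (A l))%:E).
Proof.
move=> H; rewrite -sumEFin big_nat_cond [RHS]big_nat_cond.
by apply: eq_bigr => l /andP[hl _]; rewrite EFinM fineK // H.
Qed.

Lemma main_gen n k (g : nat -> R) j : (1 <= j)%N -> (j <= n.-1)%N ->
  (forall b s, size b = j -> Iset n j (count id b) s -> has id b ->
     nth 0%N (ins b s) (n.-1).-1 = nth 0%N s (n.-1 - (count id b).+1)
     \/ (forall x y, g x = g y)) ->
  rhs_finite n k g j -> identity_holds n k g j.
Proof.
move=> j1 jn Hg fin.
pose gp x := Num.max (g x) 0; pose gn x := Num.max (- g x) 0; pose ga x := `|g x|.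
have gp0 x : 0 <= gp x by rewrite le_max lexx orbT.
have gn0 x : 0 <= gn x by rewrite le_max lexx orbT.
have ga0 x : 0 <= ga x by rewrite normr_ge0.
have HG (h : R -> R) : forall b s, size b = j -> Iset n j (count id b) s -> has id b ->
   h (g (nth 0%N (ins b s) (n.-1).-1)) = h (g (nth 0%N s (n.-1 - (count id b).+1))).
  move=> b s sb hI hb; case: (Hg b s sb hI hb) => [->|e]; first by [].
  by rewrite (e (nth 0%N (ins b s) (n.-1).-1) (nth 0%N s (n.-1 - (count id b).+1))).
have cP := core k j1 jn gp0 (HG (fun y => Num.max y 0)).
have cN := core k j1 jn gn0 (HG (fun y => Num.max (- y) 0)).
have cA := core k j1 jn ga0 (HG (fun y => `|y|)).
have c0 l : 0 <= coef R k j l.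
  by rewrite /coef divr_ge0 // ?mulr_ge0 // exprn_ge0.
have FA l : (1 <= l <= j)%N -> \esum_(s in Iset n j l) (Iterm n k ga l s)%:E \is a fin_num.
  move=> hl; rewrite ge0_fin_numE; last by apply: esum_ge0 => s _; rewrite lee_fin Iterm_ge0.
  have := fin l hl; rewrite /summable.
  by under eq_esum do rewrite abs_Iterm.
have FP l : (1 <= l <= j)%N -> \esum_(s in Iset n j l) (Iterm n k gp l s)%:E \is a fin_num.
  move=> hl; rewrite ge0_fin_numE; last by apply: esum_ge0 => s _; rewrite lee_fin Iterm_ge0.
  apply: le_lt_trans (_ : _ <= \esum_(s in Iset n j l) (Iterm n k ga l s)%:E)%E _.
    apply: le_esum => s _; rewrite lee_fin [X in X <= _]Iterm_split [X in _ <= X]Iterm_split.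
    apply: ler_wpM2l; first exact: Iterm_ge0 one_ge0.
    by rewrite ge_max ler_norm normr_ge0.
  by rewrite -ge0_fin_numE ?FA //; apply: esum_ge0 => s _; rewrite lee_fin Iterm_ge0.
have FN l : (1 <= l <= j)%N -> \esum_(s in Iset n j l) (Iterm n k gn l s)%:E \is a fin_num.
  move=> hl; rewrite ge0_fin_numE; last by apply: esum_ge0 => s _; rewrite lee_fin Iterm_ge0.
  apply: le_lt_trans (_ : _ <= \esum_(s in Iset n j l) (Iterm n k ga l s)%:E)%E _.
    apply: le_esum => s _; rewrite lee_fin [X in X <= _]Iterm_split [X in _ <= X]Iterm_split.
    apply: ler_wpM2l; first exact: Iterm_ge0 one_ge0.
    by rewrite /gn /ga ge_max normr_ge0 andbT -normrN ler_norm.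
  by rewrite -ge0_fin_numE ?FA //; apply: esum_ge0 => s _; rewrite lee_fin Iterm_ge0.
split.
  rewrite /summable.
  under eq_esum do rewrite abs_fj.
  rewrite cA sum_fine // ltry //.
under eq_bigr => l _ do rewrite sumR_Iterm.
rewrite /sumR pos_fj neg_fj cP cN sum_fine // sum_fine //.
rewrite sum_fine; last by move=> l hl; rewrite fin_numB FP ?FN.
rewrite -EFinB; congr EFin.
rewrite -sumrB big_nat_cond [RHS]big_nat_cond.
apply: eq_bigr => l /andP[hl _].
by rewrite fineB ?FP ?FN // mulrBr.
Qed.

End Main.

Theorem lemma7p2 (R : realType) (n k : nat) :
  (3 <= n)%N -> (n <= k)%N ->
  (forall (g : nat -> R) (j : nat), (1 <= j <= n - 2)%N ->
     rhs_finite n k g j -> identity_holds n k g j) /\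
  (rhs_finite n k (fun _ => 1%R : R) (n - 1) ->
     identity_holds n k (fun _ => 1%R : R) (n - 1)).
Proof.
move=> n3 nk; split.
  move=> g j /andP[j1 j2].
  have jn : (j <= n.-1)%N by lia.
  apply: main_gen => //.
  move=> b s sb hI hb; left.
  have [C1 C2] := Iset_C sb jn hI; have [_ _ _ e4] := ins_prop C1 C2.
  have cb := count_b b.
  have -> : ((n.-1).-1 = size b + ((n.-1).-1 - j))%N by lia.
  rewrite -nth_drop e4 nth_drop; congr nth; lia.
move=> fin; apply: main_gen => //; [lia | lia | by move=> *; right].
Qed.
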